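(* Let $\langle X,\tau\rangle$ be a first-countable Hausdorff space containing $[0,1)$ as a dense and co-dense subset whose subspace topology is the Sorgenfrey topology on $[0,1)$. For $U\subseteq X$ write $\breve U=U\cap[0,1)$. For $z\in X\setminus[0,1)$ let $\mathsf L(z)$ be the set of $x\in[0,1]$ such that some sequence in $[0,1)$ converges to $z$ in $\langle X,\tau\rangle$ and to $x$ in the Euclidean topology of $[0,1]$; let $\mathsf m(z)=\min\mathsf L(z)$ (which exists since $\mathsf L(z)$ is nonempty and well-ordered by $<$) and $\mathsf M(z)=\sup\mathsf L(z)$. Let $z\in X\setminus[0,1)$ and $a<b$ reals. Then: (i) there is an open neighborhood $U$ of $z$ with $y<\mathsf M(z)$ for all $y\in\breve U$; (ii) for every open neighborhood $U$ of $z$ with $\breve U=[a,b)$ we have $\mathsf M(z)\le b$; (iii) for every $x\in[0,1)$ with $x<\mathsf m(z)$ there is an open neighborhood $U$ of $z$ with $x<y$ for all $y\in\breve U$; (iv) for every $x\in[0,1)$ and every open neighborhood $U$ of $z$, if $x<y$ for all $y\in\breve U$ then $x<\mathsf m(z)$; (v) every open neighborhood $U$ of $z$ contains some $x\in\breve U$ with $x<\mathsf m(z)$.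
   Context: The Sorgenfrey topology on $[0,1)$ is generated by the sets $[a,b)\cap[0,1)$. A subset is co-dense if its complement is dense. *)

(* Defs.v *)
From HB Require Import structures.
From mathcomp Require Import all_boot all_order all_algebra.
From mathcomp Require Import all_classical all_reals all_analysis.
Set Implicit Arguments. Unset Strict Implicit. Unset Printing Implicit Defensive.
Import Order.TTheory GRing.Theory Num.Theory.
Import numFieldNormedType.Exports.
Local Open Scope classical_set_scope.
Local Open Scope ring_scope.

Definition I01 {R : realType} : set R := [set x | 0 <= x /\ x < 1].

Definition sorgenfrey_open {R : realType} (A : set R) : Prop :=
  A `<=` I01 /\
  forall x, A x -> exists a b : R,
    a <= x /\ x < b /\ [set y | a <= y /\ y < b] `&` I01 `<=` A.

Definition first_countable (X : topologicalType) : Prop :=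
  forall x : X, exists B : nat -> set X,
    (forall n, open (B n) /\ B n x) /\
    (forall U, nbhs x U -> exists n, B n `<=` U).

(* The copy of [0,1) inside X is given by e : R -> X restricted to [0,1). *)
Definition breve {R : realType} {X : Type} (e : R -> X) (U : set X) : set R :=
  [set y | I01 y /\ U (e y)].

Definition Lset {R : realType} {X : topologicalType} (e : R -> X) (z : X)
  : set R :=
  [set x : R | 0 <= x <= 1 /\
     exists s : nat -> R, (forall n, I01 (s n)) /\
       ((e \o s) @ \oo --> z) /\ (s @ \oo --> x)].

Definition msmall {R : realType} {X : topologicalType} (e : R -> X) (z : X) : R :=
  inf (Lset e z).
Definition Mbig {R : realType} {X : topologicalType} (e : R -> X) (z : X) : R :=
  sup (Lset e z).

(* Main.v *)
Require Import Defs.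
From HB Require Import structures.
From mathcomp Require Import all_boot all_order all_algebra.
From mathcomp Require Import all_classical all_reals all_analysis.
Import Order.TTheory GRing.Theory Num.Theory.
Import numFieldNormedType.Exports.
Local Open Scope classical_set_scope.
Local Open Scope ring_scope.
Set Implicit Arguments. Unset Strict Implicit.

Lemma ev_ex {Q : nat -> Prop} : (\forall n \near \oo, Q n) -> exists n, Q n.
Proof. move=> [N _ HN]; exists N; apply: HN => /=; done. Qed.

Lemma le_of_cvg (R : realType) (s : nat -> R) x c :
  s @ \oo --> x -> (\forall n \near \oo, s n <= c) -> x <= c.
Proof.
move=> hs hc; rewrite leNgt; apply/negP => cx.
have h : \forall t \near \oo, c < s t by exact: cvgr_gt hs _ cx.
have [n [h1 h2]] := ev_ex (filterI hc h).
by move: (le_lt_trans h1 h2); rewrite ltxx.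
Qed.

Lemma ge_of_cvg (R : realType) (s : nat -> R) x c :
  s @ \oo --> x -> (\forall n \near \oo, c <= s n) -> c <= x.
Proof.
move=> hs hc; rewrite leNgt; apply/negP => cx.
have h : \forall t \near \oo, s t < c by exact: cvgr_lt hs _ cx.
have [n [h1 h2]] := ev_ex (filterI hc h).
by move: (le_lt_trans h1 h2); rewrite ltxx.
Qed.

Fixpoint Cf {X : Type} (B : nat -> set X) n : set X :=
  if n is m.+1 then Cf B m `&` B m.+1 else B 0%N.

Lemma Cf_open (X : topologicalType) (B : nat -> set X) (z : X) :
  (forall n, open (B n) /\ B n z) -> forall n, open (Cf B n) /\ Cf B n z.
Proof.
move=> hB; elim=> [|n IHn] /=; first exact: hB.
case: IHn => o1 z1.
by split; [apply: openI => //; exact: (hB _).1 | split => //; exact: (hB _).2].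
Qed.

Lemma Cf_sub (X : Type) (B : nat -> set X) n k : (k <= n)%N -> Cf B n `<=` B k.
Proof.
elim: n k => [ | n IH] k /=; first by rewrite leqn0 => /eqP ->.
rewrite leq_eqVlt => /orP [/eqP -> | hk]; first by move=> x [].
by move=> x [/IH + _]; apply.
Qed.

Lemma Cf_mono (X : Type) (B : nat -> set X) n m : (n <= m)%N -> Cf B m `<=` Cf B n.
Proof.
elim: m n => [|m IH] n /=; first by rewrite leqn0 => /eqP ->.
rewrite leq_eqVlt => /orP [/eqP -> //| hk].
by move=> x [/(IH n hk) + _].
Qed.

Lemma Cf_cvg (X : topologicalType) (B : nat -> set X) (z : X) (g : nat -> X) :
  (forall U, nbhs z U -> exists n, B n `<=` U) ->
  (forall n, Cf B n (g n)) -> g @ \oo --> z.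
Proof.
move=> hB hg U /hB [n0 Hn0]; exists n0 => // n /= Hn.
apply: Hn0; exact: (@Cf_sub _ B n n0 Hn _ (hg n)).
Qed.
Lemma below (R : realType) (X : topologicalType) (e : R -> X)
  (hT2 : hausdorff_space X)
  (hsub : forall A : set R, A `<=` I01 ->
     (sorgenfrey_open A <-> exists U : set X, open U /\ A = breve e U))
  (z : X) (hz : ~ (e @` I01) z) (s : nat -> R) (x : R) :
  (forall n, I01 (s n)) -> (e \o s) @ \oo --> z -> s @ \oo --> x ->
  0 <= x <= 1 -> \forall n \near \oo, s n < x.
Proof.
move=> hs ez sx /andP[x0 x1].
move: x1; rewrite le_eqVlt => /orP[/eqP -> | x1].
  by near=> n; exact: (hs n).2.
have Ix : I01 x by split.
have exz : e x != z by apply/eqP => exz; apply: hz; exists x.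
move: hT2; rewrite open_hausdorff => /(_ _ _ exz) [[A B] /= [xA zB] [oA oB AB0]].
rewrite inE in xA; rewrite inE in zB.
have so : sorgenfrey_open (breve e A).
  apply/(hsub _ (fun y (h : breve e A y) => h.1)); by exists A.
have [a' [b' [ax [xb sub]]]] := so.2 x (conj Ix xA).
have h1 : \forall n \near \oo, B (e (s n)).
  by apply: ez; exact: open_nbhs_nbhs.
have h2 : \forall n \near \oo, s n < b' by exact: cvgr_lt sx _ xb.
near=> n.
rewrite ltNge; apply/negP => xs.
have : breve e A (s n).
  apply: sub; split; [split; [exact: le_trans ax xs | near: n; exact: h2] | exact: hs].
move=> [_ An].
have : (A `&` B) (e (s n)) by split => //; near: n; exact: h1.
by move/eqP: AB0 => ->.
Unshelve. all: end_near.
Qed.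
Lemma incr_ge (f : nat -> nat) : increasing_seq f -> forall n, (n <= f n)%N.
Proof.
move=> /increasing_seqP hf; elim=> [//|n IH].
have := hf n => /= h; exact: leq_ltn_trans IH h.
Qed.

Lemma extract (R : realType) (X : topologicalType) (e : R -> X) (z : X)
  (B : nat -> set X) (hB : forall U, nbhs z U -> exists n, B n `<=` U)
  (P : nat -> R -> Prop) :
  (forall n, exists y, I01 y /\ Cf B n (e y) /\ P n y) ->
  exists (u : nat -> R) (g : nat -> nat) (w : R),
  (forall n, I01 (u n) /\ (n <= g n)%N /\ P (g n) (u n)) /\
  u @ \oo --> w /\ (e \o u) @ \oo --> z /\ 0 <= w <= 1.
Proof.
move=> H.
pose y n := projT1 (cid (H n)).
have hy n : I01 (y n) /\ Cf B n (e (y n)) /\ P n (y n) := projT2 (cid (H n)).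
have bnd : bounded_fun y.
  rewrite /bounded_near; near=> M => n _ /=.
  have [h0 h1] := (hy n).1.
  rewrite ger0_norm //; apply: le_trans (ltW h1) _.
  near: M; exact: nbhs_pinfty_ge.
have [f incf cf] := bolzano_weierstrass bnd.
have fge := @incr_ge f incf.
exists (y \o f), f, (lim ((y \o f) @ \oo)).
have hu n : I01 ((y \o f) n) by exact: (hy (f n)).1.
split; first by move=> n; split; [exact: hu | split; [exact: fge | exact: (hy (f n)).2.2]].
split; first exact: cf.
split.
  apply: (Cf_cvg hB) => n /=.
  exact: (Cf_mono (fge n) (hy (f n)).2.1).
apply/andP; split.
  apply: (ge_of_cvg cf); near=> n; exact: (hu n).1.
apply: (le_of_cvg cf); near=> n; exact: ltW (hu n).2.
Unshelve. all: end_near.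
Qed.
Unset Implicit Arguments. Set Strict Implicit.
Theorem mainTheorem14 (R : realType) (X : topologicalType) (e : R -> X)
  (hfc : first_countable X) (hT2 : hausdorff_space X)
  (he_inj : {in I01 &, injective e})
  (hdense : dense (e @` I01))
  (hcodense : dense (~` (e @` I01)))
  (hsub : forall A : set R, A `<=` I01 ->
     (sorgenfrey_open A <-> exists U : set X, open U /\ A = breve e U))
  (z : X) (hz : ~ (e @` I01) z) (a b : R) (hab : a < b) :
  (* the minimum of L(z) exists, so msmall e z = min L(z) *)
  (Lset e z (msmall e z) /\ forall x, Lset e z x -> msmall e z <= x) /\
  (* (i) *)
  (exists U : set X, open U /\ U z /\ forall y, breve e U y -> y < Mbig e z) /\
  (* (ii) *)
  (forall U : set X, open U -> U z -> breve e U = [set y | a <= y /\ y < b] ->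
     Mbig e z <= b) /\
  (* (iii) *)
  (forall x, I01 x -> x < msmall e z ->
     exists U : set X, open U /\ U z /\ forall y, breve e U y -> x < y) /\
  (* (iv) *)
  (forall x (U : set X), I01 x -> open U -> U z ->
     (forall y, breve e U y -> x < y) -> x < msmall e z) /\
  (* (v) *)
  (forall U : set X, open U -> U z ->
     exists x, breve e U x /\ x < msmall e z).
Proof.
have [B [hB1 hB2]] := hfc z.
pose C := Cf B.
have hC := Cf_open hB1.
have hne n : exists y, I01 y /\ C n (e y) /\ True.
  have [x [Cx [y Iy eyx]]] := hdense (C n) (ex_intro _ z (hC n).2) (hC n).1.
  by exists y; split => //; split => //; rewrite eyx.
pose L := Lset e z.
have mkL (u : nat -> R) w : (forall n, I01 (u n)) -> u @ \oo --> w ->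
    (e \o u) @ \oo --> z -> 0 <= w <= 1 -> L w.
  by move=> hu uw euz w01; split => //; exists u.
have Lne : L !=set0.
  have [u [g [w [hu [uw [euz w01]]]]]] := extract hB2 hne.
  by exists w; apply: (mkL u) => // n; exact: (hu n).1.
have hlb : has_lbound L by exists 0 => x [/andP[]].
have hub : has_ubound L by exists 1 => x [/andP[]].
have nbC n : nbhs z (C n) by apply: open_nbhs_nbhs; split; [exact: (hC n).1 | exact: (hC n).2].
set m := msmall e z.
have mlb : forall x, L x -> m <= x by move=> x Lx; exact: ge_inf hlb _ Lx.
have mL : L m.
  have hP n : exists y, I01 y /\ C n (e y) /\ y < m + n.+1%:R^-1.
    have [l Ll lm] := inf_adherent (eps := n.+1%:R^-1) (E := L) ltac:(by rewrite invr_gt0 ltr0n) (conj Lne hlb).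
    case: Ll => _ [s [Is [es sl]]].
    have h1 : \forall k \near \oo, C n (e (s k)) by apply: es; exact: nbC.
    have h2 : \forall k \near \oo, s k < m + n.+1%:R^-1 by exact: cvgr_lt sl _ lm.
    have [k [k1 k2]] := ev_ex (filterI h1 h2).
    by exists (s k).
  have [u [g [w [hu [uw [euz w01]]]]]] := extract hB2 hP.
  have Lw : L w by apply: (mkL u) => // n; exact: (hu n).1.
  suff -> : m = w by [].
  apply/eqP; rewrite eq_le (mlb _ Lw) andTb leNgt; apply/negP => mw.
  have [k hk] := ltr_add_invr mw.
  have h1 : \forall n \near \oo, m + k.+1%:R^-1 < u n by exact: cvgr_gt uw _ hk.
  have h2 : \forall n \near \oo, (k <= n)%N by exists k.
  have [n [n1 n2]] := ev_ex (filterI h1 h2).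
  have [_ [gn Pn]] := hu n.
  have : u n < m + k.+1%:R^-1.
    apply: (lt_le_trans Pn); rewrite lerD2l lef_pV2 ?posrE ?ltr0n // ler_nat ltnS.
    exact: leq_trans n2 gn.
  by rewrite ltNge (ltW n1).
have hbelow := below hT2 hsub hz.
split; first by split.
split.
  set M := Mbig e z.
  case: (pselect (exists U : set X, open U /\ U z /\ forall y, breve e U y -> y < M)) => // hn.
  exfalso.
  have hP n : exists y, I01 y /\ C n (e y) /\ M <= y.
    apply: contrapT => hy; apply: hn; exists (C n); split; first exact: (hC n).1.
    split; first exact: (hC n).2.
    move=> y [Iy Cy]; rewrite ltNge; apply/negP => My; apply: hy; by exists y.
  have [u [g [w [hu [uw [euz w01]]]]]] := extract hB2 hP.
  have Lw : L w by apply: (mkL u) => // n; exact: (hu n).1.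
  have wM : w <= M by exact: ub_le_sup hub _ Lw.
  have [n un] := ev_ex (hbelow u w (fun n => (hu n).1) euz uw w01).
  have [_ [_ Mu]] := hu n.
  by move: (lt_le_trans un (le_trans wM Mu)); rewrite ltxx.
split.
  move=> U oU Uz hU; apply: ge_sup => // x [_ [s [Is [es sx]]]].
  apply: (le_of_cvg sx); near=> n.
  have : breve e U (s n).
    split; first exact: Is.
    near: n; apply: es; apply: open_nbhs_nbhs; by split.
  by rewrite hU => -[_ h]; exact: ltW.
split.
  move=> x Ix xm.
  case: (pselect (exists U : set X, open U /\ U z /\ forall y, breve e U y -> x < y)) => // hn.
  exfalso.
  have hP n : exists y, I01 y /\ C n (e y) /\ y <= x.
    apply: contrapT => hy; apply: hn; exists (C n); split; first exact: (hC n).1.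
    split; first exact: (hC n).2.
    move=> y [Iy Cy]; rewrite ltNge; apply/negP => My; apply: hy; by exists y.
  have [u [g [w [hu [uw [euz w01]]]]]] := extract hB2 hP.
  have Lw : L w by apply: (mkL u) => // n; exact: (hu n).1.
  have wx : w <= x by apply: (le_of_cvg uw); near=> n; exact: (hu n).2.2.
  by move: (le_lt_trans (le_trans (mlb _ Lw) wx) xm); rewrite ltxx.
case: mL => m01 [s [Is [es sm]]].
have hb := hbelow s m Is es sm m01.
split.
  move=> x U Ix oU Uz hx.
  have h1 : \forall n \near \oo, U (e (s n)) by apply: es; apply: open_nbhs_nbhs.
  have [n [n1 n2]] := ev_ex (filterI h1 hb).
  exact: lt_trans (hx _ (conj (Is n) n1)) n2.
move=> U oU Uz.
have h1 : \forall n \near \oo, U (e (s n)) by apply: es; apply: open_nbhs_nbhs.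
have [n [n1 n2]] := ev_ex (filterI h1 hb).
by exists (s n); split => //; split.
Unshelve. all: end_near.
Qed.
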